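(* Let $R$ be a commutative ring and $\mathcal{G}$ a Gabriel filter of finite type. Let $E$ be an injective module with $\operatorname{Cogen}E=\mathcal{F}_\mathcal{G}$ (e.g. $E=\prod\{E(R/J)\mid R/J\in\mathcal{F}_\mathcal{G}\}$), and $E_1=\prod_{I\in\mathcal{G}}E(R/I)$. Then there exists an $\mathcal{F}_\mathcal{G}$-precover $\bar f:Q\to E_1$ with $Q$ injective; for any such $\bar f$, with $K=\operatorname{Ker}\bar f$, $E_0=E\oplus Q$ and $\lambda=(0\ \bar f):E_0\to E_1$, the sequence $0\to E\oplus K\to E_0\xrightarrow{\lambda}E_1$ is exact, $C_\mathcal{G}=E\oplus K$ is a cosilting module with respect to $\lambda$, and $\operatorname{Cogen}C_\mathcal{G}=\mathcal{F}_\mathcal{G}$.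
   Context: A Gabriel filter is a filter $\mathcal{G}$ of ideals such that (i) $I\in\mathcal{G}$, $x\in R$ imply $(I:x)\in\mathcal{G}$, (ii) if $J$ is an ideal and there is $I\in\mathcal{G}$ with $(J:x)\in\mathcal{G}$ for all $x\in I$ then $J\in\mathcal{G}$; of finite type if it has a filter basis of finitely generated ideals. $\mathcal{F}_\mathcal{G}=\{M\mid\operatorname{Hom}_R(R/I,M)=0\ \forall I\in\mathcal{G}\}$. $E(M)$ is the injective envelope. An $\mathcal{F}_\mathcal{G}$-precover of $X$ is a map $f:Q\to X$ with $Q\in\mathcal{F}_\mathcal{G}$ such that every map from a module in $\mathcal{F}_\mathcal{G}$ to $X$ factors through $f$. $\operatorname{Cogen}C$: submodules of products of copies of $C$. $\mathcal{C}_\lambda=\{X\mid\operatorname{Hom}_R(X,\lambda)\text{ surjective}\}$; $C$ is cosilting with respect to $\lambda:E_0\to E_1$ if $0\to C\to E_0\xrightarrow{\lambda}E_1$ is exact with $E_0,E_1$ injective and $\operatorname{Cogen}C=\mathcal{C}_\lambda$. *)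

(* Defs.v *)
From HB Require Import structures.
From mathcomp Require Import all_boot all_order all_algebra.
From Stdlib Require Import Classical ClassicalEpsilon FunctionalExtensionality PropExtensionality.
Set Implicit Arguments. Unset Strict Implicit. Unset Printing Implicit Defensive.
Import GRing.Theory.
Local Open Scope ring_scope.

Lemma pdec (P : Prop) : {P} + {~ P}.
Proof.
have /constructive_indefinite_description [b Hb] : exists b : bool, if b then P else ~ P.
  by case: (classic P) => H; [exists true | exists false].
by case: b Hb; [left | right].
Qed.

Definition cl_eq (T : Type) (x y : T) : bool := if pdec (x = y) then true else false.
Lemma cl_eqP (T : Type) : Equality.axiom (@cl_eq T).
Proof. by move=> x y; rewrite /cl_eq; case: pdec => H; constructor. Qed.

Definition cl_find (T : Type) (P : pred T) (n : nat) : option T :=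
  match pdec (exists x, P x) with
  | left H => Some (proj1_sig (constructive_indefinite_description _ H))
  | right _ => None end.
Lemma cl_find_correct (T : Type) (P : pred T) n x : cl_find P n = Some x -> P x.
Proof. rewrite /cl_find; case: pdec => // H [<-].
by case: (constructive_indefinite_description _ H). Qed.
Lemma cl_find_complete (T : Type) (P : pred T) : (exists x, P x) -> exists n, cl_find P n.
Proof. by move=> H; exists 0%N; rewrite /cl_find; case: pdec. Qed.
Lemma cl_find_ext (T : Type) (P Q : pred T) : P =1 Q -> cl_find P =1 cl_find Q.
Proof. by move=> /functional_extensionality ->. Qed.

Definition dprodm (R : pzRingType) (I : Type) (M : I -> lmodType R) : Type :=
  forall i, M i.


HB.instance Definition _ (R : pzRingType) (I : Type) (M : I -> lmodType R) :=
  hasDecEq.Build (dprodm M) (@cl_eqP _).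
HB.instance Definition _ (R : pzRingType) (I : Type) (M : I -> lmodType R) :=
  hasChoice.Build (dprodm M) (@cl_find_correct _) (@cl_find_complete _) (@cl_find_ext _).

Definition dp_zero R I (M : I -> lmodType R) : dprodm M := fun i => 0.
Definition dp_opp R I (M : I -> lmodType R) (x : dprodm M) : dprodm M := fun i => - x i.
Definition dp_add R I (M : I -> lmodType R) (x y : dprodm M) : dprodm M := fun i => x i + y i.
Definition dp_scale R I (M : I -> lmodType R) (a : R) (x : dprodm M) : dprodm M :=
  fun i => a *: x i.

Lemma dp_addA R I (M : I -> lmodType R) : associative (@dp_add R I M).
Proof. by move=> x y z; apply: functional_extensionality_dep => i; rewrite /dp_add addrA. Qed.
Lemma dp_addC R I (M : I -> lmodType R) : commutative (@dp_add R I M).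
Proof. by move=> x y; apply: functional_extensionality_dep => i; rewrite /dp_add addrC. Qed.
Lemma dp_add0 R I (M : I -> lmodType R) : left_id (@dp_zero R I M) (@dp_add R I M).
Proof. by move=> x; apply: functional_extensionality_dep => i; rewrite /dp_add add0r. Qed.
Lemma dp_addN R I (M : I -> lmodType R) :
  left_inverse (@dp_zero R I M) (@dp_opp R I M) (@dp_add R I M).
Proof. by move=> x; apply: functional_extensionality_dep => i; rewrite /dp_add addNr. Qed.

HB.instance Definition _ (R : pzRingType) (I : Type) (M : I -> lmodType R) :=
  GRing.isZmodule.Build (dprodm M) (@dp_addA R I M) (@dp_addC R I M) (@dp_add0 R I M) (@dp_addN R I M).

Lemma dp_scaleA R I (M : I -> lmodType R) a b (v : dprodm M) :
  dp_scale a (dp_scale b v) = dp_scale (a * b) v.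
Proof. by apply: functional_extensionality_dep => i; rewrite /dp_scale scalerA. Qed.
Lemma dp_scale1 R I (M : I -> lmodType R) : left_id 1 (@dp_scale R I M).
Proof. by move=> v; apply: functional_extensionality_dep => i; rewrite /dp_scale scale1r. Qed.
Lemma dp_scaleDr R I (M : I -> lmodType R) : right_distributive (@dp_scale R I M) +%R.
Proof. by move=> a u v; apply: functional_extensionality_dep => i; rewrite /dp_scale scalerDr. Qed.
Lemma dp_scaleDl R I (M : I -> lmodType R) (v : dprodm M) :
  {morph (@dp_scale R I M)^~ v : a b / a + b}.
Proof. by move=> a b; apply: functional_extensionality_dep => i; rewrite /dp_scale scalerDl. Qed.

HB.instance Definition _ (R : pzRingType) (I : Type) (M : I -> lmodType R) :=
  GRing.Zmodule_isLmodule.Build R (dprodm M) (@dp_scaleA R I M) (@dp_scale1 R I M)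
    (@dp_scaleDr R I M) (@dp_scaleDl R I M).


Definition kerm (R : pzRingType) (U V : lmodType R) (f : {linear U -> V}) : Type :=
  {u : U | f u == 0}.

HB.instance Definition _ (R : pzRingType) (U V : lmodType R) (f : {linear U -> V}) :=
  hasDecEq.Build (kerm f) (@cl_eqP _).
HB.instance Definition _ (R : pzRingType) (U V : lmodType R) (f : {linear U -> V}) :=
  hasChoice.Build (kerm f) (@cl_find_correct _) (@cl_find_complete _) (@cl_find_ext _).

Lemma kerm_inj (R : pzRingType) (U V : lmodType R) (f : {linear U -> V}) (x y : kerm f) :
  proj1_sig x = proj1_sig y -> x = y.
Proof.
case: x y => [x Hx] [y Hy] /= E; subst y; congr exist; exact: eq_irrelevance.
Qed.

Lemma kerm0_proof (R : pzRingType) (U V : lmodType R) (f : {linear U -> V}) : f 0 == 0.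
Proof. by rewrite linear0. Qed.
Lemma kermN_proof (R : pzRingType) (U V : lmodType R) (f : {linear U -> V}) (x : kerm f) :
  f (- proj1_sig x) == 0.
Proof. by case: x => x /eqP Hx /=; rewrite linearN Hx oppr0. Qed.
Lemma kermD_proof (R : pzRingType) (U V : lmodType R) (f : {linear U -> V}) (x y : kerm f) :
  f (proj1_sig x + proj1_sig y) == 0.
Proof. by case: x y => x /eqP Hx [y /eqP Hy] /=; rewrite linearD Hx Hy addr0. Qed.
Lemma kermZ_proof (R : pzRingType) (U V : lmodType R) (f : {linear U -> V}) a (x : kerm f) :
  f (a *: proj1_sig x) == 0.
Proof. by case: x => x /eqP Hx /=; rewrite linearZ_LR Hx scaler0. Qed.

Definition km_zero (R : pzRingType) (U V : lmodType R) (f : {linear U -> V}) : kerm f := exist (fun u => f u == 0) 0 (@kerm0_proof R U V f).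
Definition km_opp (R : pzRingType) (U V : lmodType R) (f : {linear U -> V}) (x : kerm f) : kerm f :=
  exist (fun u => f u == 0) _ (@kermN_proof R U V f x).
Definition km_add (R : pzRingType) (U V : lmodType R) (f : {linear U -> V}) (x y : kerm f) : kerm f :=
  exist (fun u => f u == 0) _ (@kermD_proof R U V f x y).
Definition km_scale (R : pzRingType) (U V : lmodType R) (f : {linear U -> V}) a (x : kerm f) : kerm f :=
  exist (fun u => f u == 0) _ (@kermZ_proof R U V f a x).

Lemma km_addA (R : pzRingType) (U V : lmodType R) (f : {linear U -> V}) : associative (@km_add R U V f).
Proof. by move=> x y z; apply: kerm_inj; rewrite /= addrA. Qed.
Lemma km_addC (R : pzRingType) (U V : lmodType R) (f : {linear U -> V}) : commutative (@km_add R U V f).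
Proof. by move=> x y; apply: kerm_inj; rewrite /= addrC. Qed.
Lemma km_add0 (R : pzRingType) (U V : lmodType R) (f : {linear U -> V}) : left_id (@km_zero R U V f) (@km_add R U V f).
Proof. by move=> x; apply: kerm_inj; rewrite /= add0r. Qed.
Lemma km_addN (R : pzRingType) (U V : lmodType R) (f : {linear U -> V}) :
  left_inverse (@km_zero R U V f) (@km_opp R U V f) (@km_add R U V f).
Proof. by move=> x; apply: kerm_inj; rewrite /= addNr. Qed.

HB.instance Definition _ (R : pzRingType) (U V : lmodType R) (f : {linear U -> V}) :=
  GRing.isZmodule.Build (kerm f) (@km_addA R U V f) (@km_addC R U V f)
    (@km_add0 R U V f) (@km_addN R U V f).

Lemma km_scaleA (R : pzRingType) (U V : lmodType R) (f : {linear U -> V}) a b (v : kerm f) :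
  km_scale a (km_scale b v) = km_scale (a * b) v.
Proof. by apply: kerm_inj; rewrite /= scalerA. Qed.
Lemma km_scale1 (R : pzRingType) (U V : lmodType R) (f : {linear U -> V}) : left_id 1 (@km_scale R U V f).
Proof. by move=> v; apply: kerm_inj; rewrite /= scale1r. Qed.
Lemma km_scaleDr (R : pzRingType) (U V : lmodType R) (f : {linear U -> V}) : right_distributive (@km_scale R U V f) +%R.
Proof. by move=> a x y; apply: kerm_inj; rewrite /= scalerDr. Qed.
Lemma km_scaleDl (R : pzRingType) (U V : lmodType R) (f : {linear U -> V}) (v : kerm f) :
  {morph (@km_scale R U V f)^~ v : a b / a + b}.
Proof. by move=> a b; apply: kerm_inj; rewrite /= scalerDl. Qed.

HB.instance Definition _ (R : pzRingType) (U V : lmodType R) (f : {linear U -> V}) :=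
  GRing.Zmodule_isLmodule.Build R (kerm f) (@km_scaleA R U V f) (@km_scale1 R U V f)
    (@km_scaleDr R U V f) (@km_scaleDl R U V f).


Definition zero_then (R : pzRingType) (E Q E1 : lmodType R) (f : {linear Q -> E1})
  (p : (E * Q)%type) : E1 := f p.2.
Lemma zero_then_linear (R : pzRingType) (E Q E1 : lmodType R) (f : {linear Q -> E1}) :
  linear (@zero_then R E Q E1 f).
Proof. by move=> a [x y] [x' y']; rewrite /zero_then /= linearP. Qed.
HB.instance Definition _ (R : pzRingType) (E Q E1 : lmodType R) (f : {linear Q -> E1}) :=
  GRing.isLinear.Build R (E * Q)%type E1 _ (@zero_then R E Q E1 f)
    (@zero_then_linear R E Q E1 f).

Definition incl_ker (R : pzRingType) (E Q E1 : lmodType R) (f : {linear Q -> E1})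
  (p : (E * kerm f)%type) : (E * Q)%type := (p.1, proj1_sig p.2).

Definition is_ideal (R : comPzRingType) (I : R -> Prop) : Prop :=
  [/\ I 0, (forall a b, I a -> I b -> I (a + b)) & (forall r a, I a -> I (r * a))].

Definition fin_gen_ideal (R : comPzRingType) (I : R -> Prop) : Prop :=
  exists s : seq R, forall r, I r <-> exists c : 'I_(size s) -> R, r = \sum_(i < size s) c i * s`_i.

Definition colon (R : comPzRingType) (I : R -> Prop) (x : R) : R -> Prop := fun r => I (r * x).

Record filter_of_ideals (R : comPzRingType) (G : (R -> Prop) -> Prop) : Prop := {
  foi_ideal : forall I, G I -> is_ideal I;
  foi_nonempty : exists I, G I;
  foi_up : forall I J, G I -> is_ideal J -> (forall r, I r -> J r) -> G J;
  foi_cap : forall I J, G I -> G J -> G (fun r => I r /\ J r) }.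

Record gabriel_filter (R : comPzRingType) (G : (R -> Prop) -> Prop) : Prop := {
  gf_filter : filter_of_ideals G;
  gf_colon : forall I x, G I -> G (colon I x);
  gf_glue : forall J, is_ideal J ->
     (exists I, G I /\ forall x, I x -> G (colon J x)) -> G J }.

Definition finite_type (R : comPzRingType) (G : (R -> Prop) -> Prop) : Prop :=
  forall I, G I -> exists J, [/\ G J, fin_gen_ideal J & forall r, J r -> I r].

(* F_G = { M | Hom_R(R/I, M) = 0 for all I in G }.  A morphism R/I -> M
   is the same as an element of M annihilated by I (image of 1 + I).  *)
Definition F_G (R : comPzRingType) (G : (R -> Prop) -> Prop) (M : lmodType R) : Prop :=
  forall I, G I -> forall m : M, (forall r, I r -> r *: m = 0) -> m = 0.

Definition injective_module (R : comPzRingType) (N : lmodType R) : Prop :=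
  forall (A B : lmodType R) (i : {linear A -> B}) (g : {linear A -> N}),
    injective i -> exists h : {linear B -> N}, forall a, h (i a) = g a.

(* N is an injective envelope E(R/I): N is injective and contains an
   element x with ann(x) = I (so R x ~ R/I) such that R x is essential in N. *)
Definition inj_envelope_of_cyclic (R : comPzRingType) (I : R -> Prop) (N : lmodType R) : Prop :=
  injective_module N /\
  exists x : N, (forall r, r *: x = 0 <-> I r) /\
    (forall n : N, n != 0 -> exists r s : R, r *: n = s *: x /\ r *: n != 0).

Definition Cogen (R : comPzRingType) (C M : lmodType R) : Prop :=
  exists (X : Type) (i : {linear M -> dprodm (fun _ : X => C)}), injective i.

Definition precover (R : comPzRingType) (G : (R -> Prop) -> Prop) (Q X : lmodType R)
  (f : {linear Q -> X}) : Prop :=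
  F_G G Q /\ forall (P : lmodType R) (g : {linear P -> X}), F_G G P ->
    exists h : {linear P -> Q}, forall p, f (h p) = g p.

Definition C_lambda (R : comPzRingType) (E0 E1 : lmodType R) (lam : {linear E0 -> E1})
  (X : lmodType R) : Prop :=
  forall g : {linear X -> E1}, exists h : {linear X -> E0}, forall x, lam (h x) = g x.

Definition cosilting_wrt (R : comPzRingType) (C E0 E1 : lmodType R) (lam : {linear E0 -> E1})
  : Prop :=
  [/\ injective_module E0, injective_module E1,
      (exists i : {linear C -> E0}, injective i /\ forall e, lam e = 0 <-> exists c, i c = e)
    & forall X, Cogen C X <-> C_lambda lam X].

(* Main.v *)
Require Import Defs.
From HB Require Import structures.
From mathcomp Require Import all_boot all_order all_algebra.
From mathcomp Require classical_sets.
From Stdlib Require Import Classical ClassicalEpsilon FunctionalExtensionality PropExtensionality ProofIrrelevance.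
Set Implicit Arguments. Unset Strict Implicit. Unset Printing Implicit Defensive.
Import GRing.Theory.
Local Open Scope ring_scope.


Definition mkl (R : pzRingType) (A B : lmodType R) (f : A -> B) (H : linear f) : A -> B := f.
HB.instance Definition _ (R : pzRingType) (A B : lmodType R) (f : A -> B) (H : linear f) :=
  GRing.isLinear.Build R A B _ (@mkl R A B f H) H.

Definition L (R : pzRingType) (A B : lmodType R) (f : A -> B) (H : linear f) : {linear A -> B} :=
  @mkl R A B f H.
Lemma LE (R : pzRingType) (A B : lmodType R) (f : A -> B) (H : linear f) x : L H x = f x.
Proof. by []. Qed.


Record subsp (R : pzRingType) (M : lmodType R) := Subsp {
  sp :> M -> Prop;
  sp0 : sp 0;
  spD : forall x y, sp x -> sp y -> sp (x + y);
  spZ : forall a x, sp x -> sp (a *: x) }.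

Section Subm.
Variables (R : pzRingType) (M : lmodType R) (V : subsp M).
Definition subm : Type := {x : M | V x}.
HB.instance Definition _ := hasDecEq.Build subm (@cl_eqP _).
HB.instance Definition _ := hasChoice.Build subm (@cl_find_correct _) (@cl_find_complete _) (@cl_find_ext _).
Lemma subm_inj (x y : subm) : proj1_sig x = proj1_sig y -> x = y.
Proof. case: x y => [x Hx] [y Hy] /= E; subst y; congr exist; exact: proof_irrelevance. Qed.
Lemma spN x : V x -> V (- x).
Proof. by move=> Hx; rewrite -scaleN1r; apply: spZ. Qed.
Definition sm_zero : subm := exist _ 0 (sp0 V).
Definition sm_opp (x : subm) : subm := exist _ _ (spN (proj2_sig x)).
Definition sm_add (x y : subm) : subm := exist _ _ (spD (proj2_sig x) (proj2_sig y)).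
Definition sm_scale a (x : subm) : subm := exist _ _ (spZ a (proj2_sig x)).
Lemma sm_addA : associative sm_add.
Proof. by move=> x y z; apply: subm_inj; rewrite /= addrA. Qed.
Lemma sm_addC : commutative sm_add.
Proof. by move=> x y; apply: subm_inj; rewrite /= addrC. Qed.
Lemma sm_add0 : left_id sm_zero sm_add.
Proof. by move=> x; apply: subm_inj; rewrite /= add0r. Qed.
Lemma sm_addN : left_inverse sm_zero sm_opp sm_add.
Proof. by move=> x; apply: subm_inj; rewrite /= addNr. Qed.
HB.instance Definition _ := GRing.isZmodule.Build subm sm_addA sm_addC sm_add0 sm_addN.
Lemma sm_scaleA a b (v : subm) : sm_scale a (sm_scale b v) = sm_scale (a * b) v.
Proof. by apply: subm_inj; rewrite /= scalerA. Qed.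
Lemma sm_scale1 : left_id 1 sm_scale.
Proof. by move=> v; apply: subm_inj; rewrite /= scale1r. Qed.
Lemma sm_scaleDr : right_distributive sm_scale +%R.
Proof. by move=> a x y; apply: subm_inj; rewrite /= scalerDr. Qed.
Lemma sm_scaleDl (v : subm) : {morph sm_scale^~ v : a b / a + b}.
Proof. by move=> a b; apply: subm_inj; rewrite /= scalerDl. Qed.
HB.instance Definition _ := GRing.Zmodule_isLmodule.Build R subm sm_scaleA sm_scale1 sm_scaleDr sm_scaleDl.
Definition sincl_f (x : subm) : M := proj1_sig x.
Lemma sincl_lin : linear sincl_f. Proof. by []. Qed.
Definition sincl : {linear subm -> M} := L sincl_lin.
Lemma sincl_inj : injective sincl.
Proof. by move=> x y; apply: subm_inj. Qed.
Lemma sinclE (x : subm) : sincl x = proj1_sig x. Proof. by []. Qed.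
End Subm.


Definition pickd (T : Type) (d : T) (P : T -> Prop) : T :=
  match pdec (exists x, P x) with left H => proj1_sig (constructive_indefinite_description _ H) | right _ => d end.
Lemma pickdP (T : Type) (d : T) (P : T -> Prop) : (exists x, P x) -> P (pickd d P).
Proof. rewrite /pickd; case: pdec => // H _; exact: proj2_sig. Qed.

Section Quot.
Variables (R : pzRingType) (M : lmodType R) (V : subsp M).
Definition canon (x : M) : M := pickd 0 (fun y => V (x - y)).
Lemma canonP x : V (x - canon x).
Proof. apply: (@pickdP _ 0 (fun y => V (x - y))); exists x; rewrite subrr; exact: sp0. Qed.
Lemma canon_eq x y : V (x - y) -> canon x = canon y.
Proof.
move=> H; rewrite /canon; congr pickd; apply: functional_extensionality => z.
apply: propositional_extensionality; split => Hz.
- have -> : y - z = - (x - y) + (x - z) by rewrite opprB addrA subrK.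
  by apply: spD => //; apply: spN.
- have -> : x - z = (x - y) + (y - z) by rewrite addrA subrK.
  by apply: spD.
Qed.
Lemma canon_eqV x y : canon x = canon y -> V (x - y).
Proof.
move=> H; have -> : x - y = (x - canon x) - (y - canon y) by rewrite H opprB addrA subrK.
by apply: spD; [exact: canonP | apply: spN; exact: canonP].
Qed.
Lemma canon_idem x : canon (canon x) = canon x.
Proof. apply: canon_eq; rewrite -opprB; apply: spN; exact: canonP. Qed.
Definition quot : Type := {x : M | canon x = x}.
HB.instance Definition _ := hasDecEq.Build quot (@cl_eqP _).
HB.instance Definition _ := hasChoice.Build quot (@cl_find_correct _) (@cl_find_complete _) (@cl_find_ext _).
Lemma quot_inj (x y : quot) : proj1_sig x = proj1_sig y -> x = y.
Proof. case: x y => [x Hx] [y Hy] /= E; subst y; congr exist; exact: proof_irrelevance. Qed.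
Definition qpi (x : M) : quot := exist _ (canon x) (canon_idem x).
Lemma qpi_val (a : quot) : qpi (proj1_sig a) = a.
Proof. apply: quot_inj => /=; exact: proj2_sig a. Qed.
Lemma qpi_eq x y : qpi x = qpi y <-> V (x - y).
Proof.
split => [H|H]; last by apply: quot_inj; apply: canon_eq.
apply: canon_eqV; exact: (f_equal (@proj1_sig _ _) H).
Qed.
Lemma V_canon x : V (canon x - x).
Proof. rewrite -opprB; apply: spN; exact: canonP. Qed.
Definition q_zero : quot := qpi 0.
Definition q_opp (a : quot) : quot := qpi (- proj1_sig a).
Definition q_add (a b : quot) : quot := qpi (proj1_sig a + proj1_sig b).
Definition q_scale r (a : quot) : quot := qpi (r *: proj1_sig a).
Lemma q_addE x y : q_add (qpi x) (qpi y) = qpi (x + y).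
Proof.
apply/qpi_eq => /=; have -> : canon x + canon y - (x + y) = (canon x - x) + (canon y - y).
  by rewrite opprD addrACA.
by apply: spD; apply: V_canon.
Qed.
Lemma q_oppE x : q_opp (qpi x) = qpi (- x).
Proof. apply/qpi_eq => /=; rewrite -opprD; apply: spN; exact: V_canon. Qed.
Lemma q_scaleE r x : q_scale r (qpi x) = qpi (r *: x).
Proof. apply/qpi_eq => /=; rewrite -scalerBr; apply: spZ; exact: V_canon. Qed.
Lemma qind (P : quot -> Prop) : (forall x, P (qpi x)) -> forall a, P a.
Proof. by move=> H a; rewrite -(qpi_val a). Qed.
Lemma q_addA : associative q_add.
Proof. by elim/qind=> x; elim/qind=> y; elim/qind=> z; rewrite !q_addE addrA. Qed.
Lemma q_addC : commutative q_add.
Proof. by elim/qind=> x; elim/qind=> y; rewrite !q_addE addrC. Qed.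
Lemma q_add0 : left_id q_zero q_add.
Proof. by elim/qind=> x; rewrite /q_zero q_addE add0r. Qed.
Lemma q_addN : left_inverse q_zero q_opp q_add.
Proof. by elim/qind=> x; rewrite q_oppE q_addE addNr. Qed.
HB.instance Definition _ := GRing.isZmodule.Build quot q_addA q_addC q_add0 q_addN.
Lemma q_scaleA a b (v : quot) : q_scale a (q_scale b v) = q_scale (a * b) v.
Proof. by elim/qind: v => x; rewrite !q_scaleE scalerA. Qed.
Lemma q_scale1 : left_id 1 q_scale.
Proof. by elim/qind=> x; rewrite q_scaleE scale1r. Qed.
Lemma q_scaleDr : right_distributive q_scale +%R.
Proof. by move=> a; elim/qind=> x; elim/qind=> y; rewrite -[qpi x + qpi y]/(q_add _ _) q_addE; rewrite -[q_scale a (qpi x) + _]/(q_add _ _) !q_scaleE q_addE scalerDr. Qed.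
Lemma q_scaleDl (v : quot) : {morph q_scale^~ v : a b / a + b}.
Proof. by elim/qind: v => x a b; rewrite /GRing.add /= !q_scaleE q_addE scalerDl. Qed.
HB.instance Definition _ := GRing.Zmodule_isLmodule.Build R quot q_scaleA q_scale1 q_scaleDr q_scaleDl.
Lemma qpi_lin : linear (qpi : M -> quot).
Proof. move=> a x y; rewrite /GRing.add /GRing.scale /= q_scaleE q_addE //. Qed.
Definition qproj : {linear M -> quot} := L qpi_lin.
Lemma qproj0 x : qproj x = 0 <-> V x.
Proof.
rewrite LE; have -> : (0 : quot) = qpi 0 by [].
by rewrite qpi_eq subr0.
Qed.
Lemma qproj_surj (a : quot) : exists x, qproj x = a.
Proof. by exists (proj1_sig a); rewrite LE qpi_val. Qed.
End Quot.


Section Mods.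
Variable R : comPzRingType.

Lemma dpE (I : Type) (M : I -> lmodType R) (x y : dprodm M) a k :
  (a *: x + y) k = a *: x k + y k.
Proof. by []. Qed.

Lemma comp_lin (I : Type) (M : I -> lmodType R) (A : lmodType R) (g : {linear A -> dprodm M}) k :
  linear (fun a => g a k).
Proof. by move=> a u v; rewrite linearP. Qed.

Lemma tup_lin (I : Type) (M : I -> lmodType R) (A : lmodType R) (h : forall k, {linear A -> M k}) :
  linear (fun a => (fun k => h k a) : dprodm M).
Proof. move=> a u v; apply: functional_extensionality_dep => k; by rewrite dpE linearP. Qed.

Lemma inj_dprod (I : Type) (M : I -> lmodType R) :
  (forall i, injective_module (M i)) -> injective_module (dprodm M).
Proof.
move=> HM A B i g Hi.
have H k := HM k A B i (L (comp_lin g k)) Hi.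
pose h k := proj1_sig (constructive_indefinite_description _ (H k)).
exists (L (tup_lin h)) => a; apply: functional_extensionality_dep => k.
rewrite LE; exact: (proj2_sig (constructive_indefinite_description _ (H k)) a).
Qed.

Lemma fst_lin (A B C : lmodType R) (g : {linear A -> (B * C)%type}) : linear (fun a => (g a).1).
Proof. by move=> a u v; rewrite linearP. Qed.
Lemma snd_lin (A B C : lmodType R) (g : {linear A -> (B * C)%type}) : linear (fun a => (g a).2).
Proof. by move=> a u v; rewrite linearP. Qed.
Lemma pair_lin (A B C : lmodType R) (h1 : {linear A -> B}) (h2 : {linear A -> C}) :
  linear (fun a => (h1 a, h2 a) : (B * C)%type).
Proof. by move=> a u v; rewrite !linearP. Qed.

Lemma inj_pair (B C : lmodType R) : injective_module B -> injective_module C ->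
  injective_module (B * C)%type.
Proof.
move=> HB HC A D i g Hi.
have [h1 Hh1] := HB A D i (L (fst_lin g)) Hi.
have [h2 Hh2] := HC A D i (L (snd_lin g)) Hi.
exists (L (pair_lin h1 h2)) => a; rewrite LE Hh1 Hh2 !LE; by case: (g a).
Qed.

Variable G : (R -> Prop) -> Prop.

Lemma F_G_inj (M N : lmodType R) (i : {linear M -> N}) : injective i -> F_G G N -> F_G G M.
Proof.
move=> Hi HN I HI m Hm; apply: Hi; rewrite linear0; apply: (HN I HI) => r Hr.
by rewrite -linearZ_LR Hm // linear0.
Qed.

Lemma F_G_dprod (I : Type) (M : I -> lmodType R) : (forall k, F_G G (M k)) -> F_G G (dprodm M).
Proof.
move=> HM J HJ m Hm; apply: functional_extensionality_dep => k.
apply: (HM k J HJ) => r Hr; exact: (f_equal (fun x : dprodm M => x k) (Hm r Hr)).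
Qed.

Lemma F_G_pair (B C : lmodType R) : F_G G B -> F_G G C -> F_G G (B * C)%type.
Proof.
move=> HB HC J HJ [b c] Hm; congr pair.
- apply: (HB J HJ) => r Hr; exact: (f_equal fst (Hm r Hr)).
- apply: (HC J HJ) => r Hr; exact: (f_equal snd (Hm r Hr)).
Qed.

Lemma F_G_kerm (U V : lmodType R) (f : {linear U -> V}) : F_G G U -> F_G G (kerm f).
Proof.
move=> HU J HJ m Hm; apply: kerm_inj => /=; apply: (HU J HJ) => r Hr.
exact: (f_equal (@proj1_sig _ _) (Hm r Hr)).
Qed.

Lemma F_G_Cogen (C M : lmodType R) : F_G G C -> Cogen C M -> F_G G M.
Proof. move=> HC [X [i Hi]]; apply: (F_G_inj Hi); apply: F_G_dprod => _; exact: HC. Qed.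

Lemma diag_lin (M : lmodType R) : linear (fun m : M => (fun _ : unit => m) : dprodm (fun _ : unit => M)).
Proof. by move=> a u v; apply: functional_extensionality_dep. Qed.
Lemma Cogen_self (M : lmodType R) : Cogen M M.
Proof.
exists unit, (L (@diag_lin M)) => x y /= H.
exact: (f_equal (fun z : dprodm (fun _ : unit => M) => z tt) H).
Qed.

Lemma map_lin (X : Type) (A B : lmodType R) (j : {linear A -> B}) :
  linear (fun y : dprodm (fun _ : X => A) => (fun k => j (y k)) : dprodm (fun _ : X => B)).
Proof. by move=> a u v; apply: functional_extensionality_dep => k; rewrite dpE linearP. Qed.

Lemma o_lin (A B C : lmodType R) (g : {linear B -> C}) (f : {linear A -> B}) :
  linear (fun x => g (f x)).
Proof. by move=> a u v; rewrite !linearP. Qed.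
Definition lcomp (A B C : lmodType R) (g : {linear B -> C}) (f : {linear A -> B}) :
  {linear A -> C} := L (o_lin g f).

Lemma Cogen_mono (A B M : lmodType R) (j : {linear A -> B}) : injective j -> Cogen A M -> Cogen B M.
Proof.
move=> Hj [X [i Hi]]; exists X, (lcomp (L (@map_lin X A B j)) i) => x y /= H; apply: Hi.
apply: functional_extensionality_dep => k; apply: Hj.
exact: (f_equal (fun z : dprodm (fun _ : X => B) => z k) H).
Qed.
End Mods.


Definition ceq (T : Type) : Type := T.
HB.instance Definition _ (T : Type) := hasDecEq.Build (ceq T) (@cl_eqP T).

Lemma sum_inv (Z : Type) (V : nmodType) (F : ceq Z -> V) (s1 s2 : seq (ceq Z)) :
  uniq s1 -> uniq s2 -> (forall z, z \notin s1 -> F z = 0) -> (forall z, z \notin s2 -> F z = 0) ->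
  \sum_(z <- s1) F z = \sum_(z <- s2) F z.
Proof.
move=> u1 u2 H1 H2.
have E1 : \sum_(z <- s1) F z = \sum_(z <- [seq z <- s1 | z \in s2]) F z.
  rewrite big_filter [RHS]big_mkcond; apply: eq_bigr => z _; case: ifP => // /negbT; exact: H2.
have E2 : \sum_(z <- s2) F z = \sum_(z <- [seq z <- s2 | z \in s1]) F z.
  rewrite big_filter [RHS]big_mkcond; apply: eq_bigr => z _; case: ifP => // /negbT; exact: H1.
rewrite E1 E2; apply: perm_big; apply: uniq_perm; rewrite ?filter_uniq // => z.
by rewrite !mem_filter andbC.
Qed.

Section DSum.
Variables (R : comPzRingType) (W T : lmodType R).
Definition Zt : Type := ceq {linear W -> T}.
Definition QQ : lmodType R := dprodm (fun _ : {linear W -> T} => W).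
Definition fsupp (q : QQ) : Prop := exists s : seq Zt, forall z : Zt, z \notin s -> q z = 0.
Lemma fsupp0 : fsupp 0. Proof. by exists [::]. Qed.
Lemma fsuppD x y : fsupp x -> fsupp y -> fsupp (x + y).
Proof.
move=> [s1 H1] [s2 H2]; exists (s1 ++ s2) => z; rewrite mem_cat negb_or => /andP[a b].
by rewrite /GRing.add /= /dp_add H1 // H2 // addr0.
Qed.
Lemma fsuppZ a x : fsupp x -> fsupp (a *: x).
Proof.
move=> [s1 H1]; exists s1 => z Hz.
by rewrite /GRing.scale /= /dp_scale H1 // scaler0.
Qed.
Definition Dsp : subsp QQ := Subsp fsupp0 fsuppD fsuppZ.
Definition sl (q : QQ) : seq Zt := undup (pickd [::] (fun s : seq Zt => forall z : Zt, z \notin s -> q z = 0)).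
Lemma slP q : fsupp q -> forall z : Zt, z \notin sl q -> q z = 0.
Proof.
move=> Hq z; rewrite mem_undup; move: z.
exact: (@pickdP _ [::] (fun s : seq Zt => forall z : Zt, z \notin s -> q z = 0)).
Qed.
Definition Fsum (q : QQ) : T := \sum_(z <- sl q) (z : {linear W -> T}) (q z).
Lemma FsumE q (s : seq Zt) : fsupp q -> uniq s -> (forall z : Zt, z \notin s -> q z = 0) ->
  Fsum q = \sum_(z <- s) (z : {linear W -> T}) (q z).
Proof.
move=> Hq us Hs; apply: sum_inv; rewrite ?undup_uniq // => z Hz.
- by rewrite slP // linear0.
- by rewrite Hs // linear0.
Qed.
Definition f0 (d : subm Dsp) : T := Fsum (proj1_sig d).
Lemma f0_lin : linear f0.
Proof.
move=> a [x Hx] [y Hy]; rewrite /f0 /=.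
have Hxy : fsupp (a *: x + y) by apply: fsuppD => //; apply: fsuppZ.
set s := undup (sl x ++ sl y).
have Hs (q : QQ) : fsupp q -> (forall z : Zt, z \notin sl q -> q z = 0).
  exact: slP.
have Hsx : forall z : Zt, z \notin s -> x z = 0.
  by move=> z; rewrite mem_undup mem_cat negb_or => /andP[]; move/(slP Hx).
have Hsy : forall z : Zt, z \notin s -> y z = 0.
  by move=> z; rewrite mem_undup mem_cat negb_or => /andP[_]; move/(slP Hy).
rewrite (@FsumE (a *: x + y) s Hxy (undup_uniq _)); last first.
  by move=> z Hz; rewrite /GRing.add /= /dp_add /GRing.scale /= /dp_scale Hsx // Hsy // scaler0 addr0.
rewrite (@FsumE x s Hx (undup_uniq _) Hsx) (@FsumE y s Hy (undup_uniq _) Hsy).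
rewrite scaler_sumr -big_split /=; apply: eq_bigr => z _.
by rewrite /GRing.add /= /dp_add /GRing.scale /= /dp_scale linearP.
Qed.
Definition jj (c : {linear W -> T}) (w : W) : QQ :=
  fun z => if (z == c :> Zt) then w else 0.
Lemma jj_lin c : linear (jj c).
Proof.
move=> a u v; apply: functional_extensionality_dep => z.
rewrite /jj /GRing.add /= /dp_add /GRing.scale /= /dp_scale.
by case: ifP => _; rewrite ?scaler0 ?addr0.
Qed.
Lemma jj_supp c w : fsupp (jj c w).
Proof. by exists [:: (c : Zt)] => z; rewrite inE /jj => /negbTE ->. Qed.

Lemma dsum_exists : injective_module T ->
  exists f : {linear QQ -> T}, forall c : {linear W -> T}, exists j : {linear W -> QQ},
    forall w, f (j w) = c w.
Proof.
move=> hT; have [f Hf] := hT _ _ (sincl Dsp) (L f0_lin) (@sincl_inj _ _ Dsp).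
exists f => c; exists (L (jj_lin c)) => w.
have := Hf (exist _ (jj c w) (jj_supp c w)); rewrite sinclE LE /= => ->.
rewrite /f0 /= (@FsumE _ [:: (c : Zt)] (jj_supp c w)) //; last first.
  by move=> z; rewrite inE /jj => /negbTE ->.
by rewrite big_seq1 /jj eqxx.
Qed.
End DSum.


Lemma zswap (V : zmodType) (a b c d : V) : a + b = c + d -> b - d = c - a.
Proof. by move=> H; apply/eqP; rewrite subr_eq addrAC -H addrAC subrr add0r. Qed.

Definition pb (P : Prop) : bool := if pdec P then true else false.
Lemma pbP (P : Prop) : pb P <-> P.
Proof. by rewrite /pb; case: pdec. Qed.

Section Lift.
Variables (R : comPzRingType) (G : (R -> Prop) -> Prop) (hG : gabriel_filter G) (hfin : finite_type G).
Variables (Q T P : lmodType R) (f : {linear Q -> T}) (g : {linear P -> T}) (hP : F_G G P).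

Record pl := Pl {
  pN : P -> Prop; ph : P -> Q;
  pN0 : pN 0;
  pND : forall x y, pN x -> pN y -> pN (x + y);
  pNZ : forall a x, pN x -> pN (a *: x);
  psat : forall I, G I -> forall x, (forall r, I r -> pN (r *: x)) -> pN x;
  phlin : forall a x y, pN x -> pN y -> ph (a *: x + y) = a *: ph x + ph y;
  phg : forall x, pN x -> f (ph x) = g x }.

Definition ple (a b : pl) : Prop := (forall x, pN a x -> pN b x) /\ (forall x, pN a x -> ph b x = ph a x).

Lemma bot_sat I : G I -> forall x : P, (forall r, I r -> r *: x = 0) -> x = 0.
Proof. move=> HI x Hx; exact: (hP HI Hx). Qed.

Definition pbot : pl.
refine (@Pl (fun x => x = 0) (fun _ => 0) _ _ _ _ _ _).
- by [].
- by move=> x y -> ->; rewrite addr0.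
- by move=> a x ->; rewrite scaler0.
- by move=> I HI x Hx; apply: (bot_sat HI).
- by move=> a x y _ _; rewrite scaler0 addr0.
- by move=> x ->; rewrite !linear0.
Defined.

Section Chain.
Variable A : pl -> Prop.
Hypothesis Atot : forall s t, A s -> A t -> ple s t \/ ple t s.
Variable a0 : pl.
Hypothesis Aa0 : A a0.

Definition UN (x : P) : Prop := exists a, A a /\ pN a x.
Definition UH (x : P) : Q := match pdec (UN x) with
  left H => ph (proj1_sig (constructive_indefinite_description _ H)) x | right _ => 0 end.
Lemma UH_spec a x : A a -> pN a x -> UH x = ph a x.
Proof.
move=> Aa Hx; rewrite /UH; case: pdec => [H|]; last by move=> []; exists a.
case: (constructive_indefinite_description _ H) => b [Ab Hb] /=.
by case: (Atot Aa Ab) => [[_ E]|[_ E]]; rewrite E.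
Qed.
Lemma UN_list (F : nat -> P) n : (forall i, (i < n)%N -> UN (F i)) ->
  exists a, A a /\ forall i, (i < n)%N -> pN a (F i).
Proof.
elim: n => [|n IH] H; first by exists a0; split.
have [a [Aa Ha]] := IH (fun i Hi => H i (ltnW Hi)).
have [b [Ab Hb]] := H n (ltnSn n).
case: (Atot Aa Ab) => [[E _]|[E _]].
- exists b; split => // i; rewrite ltnS leq_eqVlt => /orP[/eqP ->//|Hi]; exact: E (Ha i Hi).
- exists a; split => // i; rewrite ltnS leq_eqVlt => /orP[/eqP ->|Hi]; [exact: E|exact: Ha].
Qed.
Lemma UN2 x y : UN x -> UN y -> exists a, A a /\ pN a x /\ pN a y.
Proof.
move=> [a [Aa Ha]] [b [Ab Hb]]; case: (Atot Aa Ab) => [[E _]|[E _]].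
- by exists b; split => //; split => //; apply: E.
- by exists a; split => //; split => //; apply: E.
Qed.
Lemma UN0 : UN 0. Proof. by exists a0; split => //; apply: pN0. Qed.
Lemma UND x y : UN x -> UN y -> UN (x + y).
Proof. by move=> Hx Hy; have [a [Aa [H1 H2]]] := UN2 Hx Hy; exists a; split => //; apply: pND. Qed.
Lemma UNZ c x : UN x -> UN (c *: x).
Proof. by move=> [a [Aa H]]; exists a; split => //; apply: pNZ. Qed.
Lemma UNsat I : G I -> forall x, (forall r, I r -> UN (r *: x)) -> UN x.
Proof.
move=> HI x Hx; have [J [GJ [s Hs] JI]] := hfin HI.
have Hgen i : (i < size s)%N -> J s`_i.
  move=> Hi; apply/Hs; exists (fun k : 'I_(size s) => if (k : nat) == i then 1 else 0).
  rewrite (bigD1 (Ordinal Hi)) //= eqxx mul1r big1 ?addr0 // => k Hk.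
  by rewrite ifN ?mul0r //; apply: contra Hk => /eqP E; apply/eqP; apply: val_inj.
have [a [Aa Ha]] := @UN_list (fun i => s`_i *: x) (size s) (fun i Hi => Hx _ (JI _ (Hgen i Hi))).
exists a; split => //; apply: (psat GJ) => r /Hs [c ->].
rewrite scaler_suml; apply: (big_ind (pN a)); [exact: pN0| exact: pND|] => i _.
by rewrite -scalerA; apply: pNZ; apply: Ha.
Qed.
Lemma UHlin c x y : UN x -> UN y -> UH (c *: x + y) = c *: UH x + UH y.
Proof.
move=> Hx Hy; have [a [Aa [H1 H2]]] := UN2 Hx Hy.
rewrite !(UH_spec Aa) //; last by apply: pND => //; apply: pNZ.
exact: phlin.
Qed.
Lemma UHg x : UN x -> f (UH x) = g x.
Proof. by move=> [a [Aa H]]; rewrite (UH_spec Aa H); apply: phg. Qed.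
Definition pub : pl := Pl UN0 UND UNZ UNsat UHlin UHg.
Lemma pub_ub a : A a -> ple a pub.
Proof. by move=> Aa; split => x Hx /=; [exists a | apply: UH_spec]. Qed.
End Chain.

Lemma ple_refl a : ple a a. Proof. by split. Qed.
Lemma ple_trans a b c : ple a b -> ple b c -> ple a c.
Proof. move=> [H1 H2] [H3 H4]; split => x Hx; [by auto| by rewrite H4 ?H2 //; auto]. Qed.

Lemma pl_max : exists m : pl, forall s, ple m s -> ple s m.
Proof.
have H1 : forall a, pb (ple a a) by move=> a; apply/pbP; apply: ple_refl.
have H2 : forall a b c, pb (ple a b) -> pb (ple b c) -> pb (ple a c).
  by move=> a b c /pbP K1 /pbP K2; apply/pbP; apply: ple_trans K1 K2.
have H3 : forall A : pl -> Prop, classical_sets.total_on A (fun a b => pb (ple a b)) ->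
    exists t, forall s, A s -> pb (ple s t).
  move=> A Atot; case: (classic (exists a0, A a0)) => [[a0 Aa0]|NA].
  + have Atot' : forall s t, A s -> A t -> ple s t \/ ple t s.
      by move=> s t As At; case: (Atot s t As At) => /pbP; auto.
    by exists (pub Atot' Aa0) => s As; apply/pbP; apply: pub_ub.
  + by exists pbot => s As; case: NA; exists s.
have [m Hm] := @classical_sets.ZL_preorder pl pbot (fun a b => pb (ple a b)) H1 H2 H3.
by exists m => s /pbP H; apply/pbP; exact: Hm.
Qed.

Lemma Gfull : G (fun _ => True).
Proof.
have [I HI] := foi_nonempty (gf_filter hG).
apply: (foi_up (gf_filter hG) HI) => //; split => //.
Qed.

Variables (E : lmodType R) (hE : injective_module E) (hcog : forall M, F_G G M -> Cogen E M).
Variables (hQ : injective_module Q) (hT : injective_module T).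
Variable (hf : forall c : {linear dprodm (fun _ : E => E) -> T}, exists j : {linear dprodm (fun _ : E => E) -> Q}, forall w, f (j w) = c w).

Section Step.
Variables (m : pl) (p : P) (Hp : ~ pN m p).
Let N := pN m.
Definition Nsp : subsp P := @Subsp _ _ (pN m) (@pN0 m) (@pND m) (@pNZ m).
Lemma Mq_F : F_G G (quot Nsp).
Proof.
move=> I HI; elim/qind => x Hx; have : N x.
  apply: (psat HI) => r Hr; have := Hx r Hr.
  have -> : r *: qpi Nsp x = qpi Nsp (r *: x) by rewrite /GRing.scale /= q_scaleE.
  by rewrite -[qpi Nsp (r *: x)]/(qproj Nsp (r *: x)) => /qproj0.
by move=> Hx'; exact: (proj2 (qproj0 Nsp x) Hx').
Qed.
Definition Aid r := N (r *: p).
Definition WW : lmodType R := dprodm (fun _ : E => E).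
Definition ww : WW := fun e => if pdec (forall r, Aid r -> r *: e = 0) then e else 0.
Lemma wA r : Aid r -> r *: ww = 0.
Proof.
move=> Hr; apply: functional_extensionality_dep => e.
have -> : (r *: ww) e = r *: ww e by [].
have -> : (0 : WW) e = 0 by [].
rewrite /ww; destruct (pdec (forall r, Aid r -> r *: e = 0)) as [H|H]; [exact: H| exact: scaler0].
Qed.
Lemma annw r : r *: ww = 0 -> Aid r.
Proof.
move=> Hw; apply: NNPP => Hr.
have [X [j Hj]] := hcog Mq_F.
have H0 : j (qproj Nsp (r *: p)) <> 0.
  move=> E0; apply: Hr; apply: (proj1 (qproj0 Nsp (r *: p))); apply: Hj; by rewrite E0 linear0.
have [k Hk] : exists k, j (qproj Nsp (r *: p)) k <> 0.
  apply: NNPP => K; apply: H0; apply: functional_extensionality_dep => k.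
  by apply: NNPP => K2; apply: K; exists k.
set e := j (qproj Nsp p) k.
have He : forall t, Aid t -> t *: e = 0.
  move=> t Ht; rewrite /e.
  have -> : t *: j (qproj Nsp p) k = (t *: j (qproj Nsp p)) k by [].
  by rewrite -!linearZ_LR (proj2 (qproj0 Nsp (t *: p)) Ht) linear0.
have := f_equal (fun z : WW => z e) Hw.
have -> : (r *: ww) e = r *: ww e by [].
have -> : (0 : WW) e = 0 by [].
rewrite /ww; destruct (pdec (forall r, Aid r -> r *: e = 0)) as [H|H]; last by []; move=> Hre; apply: Hk.
have -> : j (qproj Nsp (r *: p)) k = (r *: j (qproj Nsp p)) k by rewrite !linearZ_LR.
exact: Hre.
Qed.

Definition V1 (x : P) : Prop := exists n s, N n /\ x = n + s *: p.
Lemma V1_0 : V1 0. Proof. by exists 0, 0; split; [apply: pN0| rewrite scale0r addr0]. Qed.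
Lemma V1_D x y : V1 x -> V1 y -> V1 (x + y).
Proof.
move=> [n1 [s1 [H1 ->]]] [n2 [s2 [H2 ->]]]; exists (n1 + n2), (s1 + s2); split; first exact: pND.
by rewrite scalerDl addrACA.
Qed.
Lemma V1_Z a x : V1 x -> V1 (a *: x).
Proof.
move=> [n1 [s1 [H1 ->]]]; exists (a *: n1), (a * s1); split; first exact: pNZ.
by rewrite scalerDr scalerA.
Qed.
Definition V1sp : subsp P := Subsp V1_0 V1_D V1_Z.
Definition i0 (v : subm V1sp) : WW :=
  pickd 0 (fun y => exists n s, N n /\ proj1_sig v = n + s *: p /\ y = s *: ww).
Lemma NB x y : N x -> N y -> N (x - y).
Proof. by move=> Hx Hy; apply: pND => //; rewrite -scaleN1r; apply: pNZ. Qed.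
Lemma i0E v n s : N n -> proj1_sig v = n + s *: p -> i0 v = s *: ww.
Proof.
move=> Hn Hv; rewrite /i0.
have [n' [s' [Hn' [Hv' ->]]]] := @pickdP _ 0 (fun y => exists n s, N n /\ proj1_sig v = n + s *: p /\ y = s *: ww)
  (ex_intro _ (s *: ww) (ex_intro _ n (ex_intro _ s (conj Hn (conj Hv erefl))))).
apply/eqP; rewrite -subr_eq0 -scalerBl; apply/eqP; apply: wA.
rewrite /Aid scalerBl (@zswap _ n' (s' *: p) n (s *: p)); last by rewrite -Hv' -Hv.
exact: NB.
Qed.
Lemma i0_lin : linear i0.
Proof.
move=> a [x Hx] [y Hy].
have [n1 [s1 [H1 E1]]] := Hx; have [n2 [s2 [H2 E2]]] := Hy.
rewrite (@i0E (exist _ x Hx) n1 s1 H1 E1) (@i0E (exist _ y Hy) n2 s2 H2 E2).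
rewrite (@i0E _ (a *: n1 + n2) (a * s1 + s2)); first by rewrite scalerDl scalerA.
  by apply: pND => //; apply: pNZ.
by rewrite /= E1 E2 scalerDl scalerDr -scalerA addrACA.
Qed.
Definition hW : injective_module WW := inj_dprod (fun _ => hE).
Definition iota : {linear P -> WW} :=
  proj1_sig (constructive_indefinite_description _ (@hW _ _ (sincl V1sp) (L i0_lin) (@sincl_inj _ _ V1sp))).
Lemma iotaE n s : N n -> iota (n + s *: p) = s *: ww.
Proof.
move=> Hn; have Hv : V1 (n + s *: p) by rewrite /V1; exists n, s.
have := proj2_sig (constructive_indefinite_description _ (@hW _ _ (sincl V1sp) (L i0_lin) (@sincl_inj _ _ V1sp))) (exist _ _ Hv).
rewrite sinclE LE /= => ->. by apply: (@i0E _ n s Hn).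
Qed.
Lemma iotaN n : N n -> iota n = 0.
Proof. by move=> Hn; have := iotaE 0 Hn; rewrite !scale0r addr0. Qed.

Definition Sx (x : P) : Prop := exists I, G I /\ forall r, I r -> V1 (r *: x).
Lemma S0 : Sx 0. Proof. by exists (fun _ => True); split; [exact: Gfull| move=> r _; rewrite scaler0; exact: V1_0]. Qed.
Lemma SD x y : Sx x -> Sx y -> Sx (x + y).
Proof.
move=> [I [GI HI]] [J [GJ HJ]]; exists (fun r => I r /\ J r); split.
  exact: (foi_cap (gf_filter hG)).
by move=> r [Ir Jr]; rewrite scalerDr; apply: V1_D; auto.
Qed.
Lemma SZ a x : Sx x -> Sx (a *: x).
Proof.
move=> [I [GI HI]]; exists I; split => // r Ir.
by rewrite scalerA mulrC -scalerA; apply: V1_Z; auto.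
Qed.
Lemma colon_ideal (K : R -> Prop) r : is_ideal K -> is_ideal (colon K r).
Proof.
move=> [K0 KD KM]; split; rewrite /colon.
- by rewrite mul0r.
- by move=> a b Ha Hb; rewrite mulrDl; apply: KD.
- by move=> c a Ha; rewrite -mulrA; apply: KM.
Qed.
Lemma Ssat I : G I -> forall x, (forall r, I r -> Sx (r *: x)) -> Sx x.
Proof.
move=> GI x Hx; pose K t := V1 (t *: x).
have HK : is_ideal K.
  split; rewrite /K.
  - by rewrite scale0r; exact: V1_0.
  - by move=> a b Ha Hb; rewrite scalerDl; apply: V1_D.
  - by move=> c a Ha; rewrite -scalerA; apply: V1_Z.
exists K; split => //; apply: (gf_glue hG HK); exists I; split => // r Ir.
have [J [GJ HJ]] := Hx r Ir.
apply: (foi_up (gf_filter hG) GJ); first exact: colon_ideal.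
by move=> t Jt; rewrite /colon /K -scalerA; apply: HJ.
Qed.
Lemma S_iota x : Sx x -> iota x = 0 -> N x.
Proof.
move=> [K [GK HK]] Hi; apply: (@psat m K GK x) => r Hr.
have [n [s [Hn HE]]] := HK r Hr.
have : iota (r *: x) = 0 by rewrite linearZ_LR Hi scaler0.
rewrite HE iotaE // => /annw Hs; apply: pND => //.
Qed.
Lemma N_S x : N x -> Sx x.
Proof.
move=> Hx; exists (fun _ => True); split; first exact: Gfull.
by move=> r _; exists (r *: x), 0; split; [apply: pNZ| rewrite scale0r addr0].
Qed.
Lemma p_S : Sx p.
Proof.
exists (fun _ => True); split; first exact: Gfull.
by move=> r _; exists 0, r; split; [apply: pN0| rewrite add0r].
Qed.

Definition hN (v : subm Nsp) : Q := ph m (proj1_sig v).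
Lemma hN_lin : linear hN.
Proof. by move=> a [x Hx] [y Hy]; rewrite /hN /=; apply: phlin. Qed.
Definition h1 : {linear P -> Q} :=
  proj1_sig (constructive_indefinite_description _ (@hQ _ _ (sincl Nsp) (L hN_lin) (@sincl_inj _ _ Nsp))).
Lemma h1E n : N n -> h1 n = ph m n.
Proof.
move=> Hn; have := proj2_sig (constructive_indefinite_description _ (@hQ _ _ (sincl Nsp) (L hN_lin) (@sincl_inj _ _ Nsp))) (exist _ _ Hn).
by rewrite sinclE LE.
Qed.
Definition dlt (x : P) : T := g x - f (h1 x).
Lemma dlt_lin : linear dlt.
Proof. by move=> a x y; rewrite /dlt (linearP g) (linearP h1) (linearP f) scalerBr opprD addrACA. Qed.
Lemma dltN n : N n -> dlt n = 0.
Proof. by move=> Hn; rewrite /dlt h1E // phg // subrr. Qed.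

Definition V2 (y : WW) : Prop := exists x, Sx x /\ y = iota x.
Lemma V2_0 : V2 0. Proof. by exists 0; split; [exact: S0| rewrite linear0]. Qed.
Lemma V2_D x y : V2 x -> V2 y -> V2 (x + y).
Proof. by move=> [a [Ha ->]] [b [Hb ->]]; exists (a + b); split; [apply: SD| rewrite linearD]. Qed.
Lemma V2_Z c x : V2 x -> V2 (c *: x).
Proof. by move=> [a [Ha ->]]; exists (c *: a); split; [apply: SZ| rewrite linearZ_LR]. Qed.
Definition V2sp : subsp WW := Subsp V2_0 V2_D V2_Z.
Definition d0 (v : subm V2sp) : T :=
  pickd 0 (fun t => exists x, Sx x /\ proj1_sig v = iota x /\ t = dlt x).
Lemma d0E v x : Sx x -> proj1_sig v = iota x -> d0 v = dlt x.
Proof.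
move=> Hx Hv; rewrite /d0.
have [x' [Hx' [Hv' ->]]] := @pickdP _ 0 (fun t => exists x, Sx x /\ proj1_sig v = iota x /\ t = dlt x)
  (ex_intro _ (dlt x) (ex_intro _ x (conj Hx (conj Hv erefl)))).
have HS : Sx (x' - x) by apply: SD => //; rewrite -scaleN1r; apply: SZ.
have HN : N (x' - x) by apply: S_iota => //; rewrite linearB -Hv -Hv' subrr.
apply/eqP; rewrite -subr_eq0 -[dlt x' - dlt x]/(L dlt_lin x' - L dlt_lin x) -linearB LE dltN //.
Qed.
Lemma d0_lin : linear d0.
Proof.
move=> a [y1 Hy1] [y2 Hy2]; have [x1 [H1 E1]] := Hy1; have [x2 [H2 E2]] := Hy2.
rewrite (@d0E (exist _ y1 Hy1) x1 H1 E1) (@d0E (exist _ y2 Hy2) x2 H2 E2) (@d0E _ (a *: x1 + x2)).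
- by rewrite -[dlt _]/(L dlt_lin _) linearP.
- by apply: SD => //; apply: SZ.
- by rewrite /= E1 E2 linearP.
Qed.
Definition chi : {linear WW -> T} :=
  proj1_sig (constructive_indefinite_description _ (@hT _ _ (sincl V2sp) (L d0_lin) (@sincl_inj _ _ V2sp))).
Lemma chiE x : Sx x -> chi (iota x) = dlt x.
Proof.
move=> Hx; have Hv : V2 (iota x) by exists x.
have := proj2_sig (constructive_indefinite_description _ (@hT _ _ (sincl V2sp) (L d0_lin) (@sincl_inj _ _ V2sp))) (exist _ _ Hv).
rewrite sinclE LE /= => ->; exact: d0E.
Qed.
Definition jchi : {linear WW -> Q} := proj1_sig (constructive_indefinite_description _ (hf chi)).
Lemma jchiE w : f (jchi w) = chi w.
Proof. exact: (proj2_sig (constructive_indefinite_description _ (hf chi))). Qed.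
Definition h2 (x : P) : Q := h1 x + jchi (iota x).
Lemma h2_lin a x y : Sx x -> Sx y -> h2 (a *: x + y) = a *: h2 x + h2 y.
Proof. by move=> _ _; rewrite /h2 !linearP scalerDr addrACA. Qed.
Lemma h2g x : Sx x -> f (h2 x) = g x.
Proof. by move=> Hx; rewrite /h2 linearD jchiE chiE // /dlt addrC subrK. Qed.
Definition pnew : pl := Pl S0 SD SZ Ssat h2_lin h2g.
Lemma step : exists s, ple m s /\ pN s p.
Proof.
exists pnew; split; last exact: p_S.
split => x Hx /=; first exact: N_S.
by rewrite /h2 h1E // iotaN // linear0 addr0.
Qed.
End Step.

Lemma lift_main : exists h : {linear P -> Q}, forall x, f (h x) = g x.
Proof.
have [m Hm] := pl_max.
have Hall : forall x, pN m x.
  move=> x; apply: NNPP => Hx; have [s [Hs Hsx]] := @step m x.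
  by have [H _] := Hm s Hs; apply: Hx; apply: H.
have Hl : linear (ph m) by move=> a x y; apply: phlin.
by exists (L Hl) => x; rewrite LE; apply: phg.
Qed.
End Lift.

Section Env.
Variables (R : comPzRingType) (G : (R -> Prop) -> Prop) (hG : gabriel_filter G).
Variable (env : forall I : {I : R -> Prop | G I}, lmodType R).
Definition injc (z : {I : R -> Prop | G I}) (v : env z) : dprodm env :=
  fun k => match pdec (z = k) with left e => eq_rect z env v k e | right _ => 0 end.
Lemma injc_lin z : linear (@injc z).
Proof.
move=> a u v; apply: functional_extensionality_dep => k; rewrite dpE /injc.
case: (pdec (z = k)) => [e|_]; last by rewrite scaler0 addr0.
by case: k / e.
Qed.
Lemma injc_at z v : @injc z v z = v.
Proof.
rewrite /injc; case: (pdec (z = z)) => [e|//].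
by rewrite (proof_irrelevance _ e erefl).
Qed.
End Env.

Lemma Clam_FG (R : comPzRingType) (G : (R -> Prop) -> Prop) (hG : gabriel_filter G)
  (env : forall I : {I : R -> Prop | G I}, lmodType R)
  (henv : forall I, inj_envelope_of_cyclic (proj1_sig I) (env I))
  (E Q : lmodType R) (f : {linear Q -> dprodm env}) (FQ : F_G G Q) (X : lmodType R) :
  C_lambda (@zero_then R E Q (dprodm env) f : {linear (E * Q)%type -> dprodm env}) X -> F_G G X.
Proof.
move=> HX I GI m Hm.
pose J r := r *: m = 0.
have IJ : is_ideal J.
  split; rewrite /J; first by rewrite scale0r.
  - by move=> a b Ha Hb; rewrite scalerDl Ha Hb addr0.
  - by move=> r a Ha; rewrite -scalerA Ha scaler0.
have GJ : G J by apply: (foi_up (gf_filter hG) GI) => // r Hr; apply: Hm.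
pose z := exist G J GJ.
have [injz [x [annx _]]] := henv z.
have V0 : (fun y => exists r, y = r *: m) 0 by exists 0; rewrite scale0r.
have VD : forall y1 y2, (fun y => exists r, y = r *: m) y1 -> (fun y => exists r, y = r *: m) y2 ->
   (fun y => exists r, y = r *: m) (y1 + y2).
  by move=> y1 y2 [r1 ->] [r2 ->]; exists (r1 + r2); rewrite scalerDl.
have VZ : forall a y, (fun y => exists r, y = r *: m) y -> (fun y => exists r, y = r *: m) (a *: y).
  by move=> a y [r ->]; exists (a * r); rewrite scalerA.
pose V := Subsp V0 VD VZ.
pose phi0 (v : subm V) : env z := pickd 0 (fun t => exists r, proj1_sig v = r *: m /\ t = r *: x).
have phi0E : forall v r, proj1_sig v = r *: m -> phi0 v = r *: x.
  move=> v r Hv; rewrite /phi0.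
  have [r' [Hv' ->]] := @pickdP _ 0 (fun t => exists r, proj1_sig v = r *: m /\ t = r *: x)
    (ex_intro _ (r *: x) (ex_intro _ r (conj Hv erefl))).
  apply/eqP; rewrite -subr_eq0 -scalerBl; apply/eqP; apply/annx.
  change ((r' - r) *: m = 0); by rewrite scalerBl -Hv -Hv' subrr.
have phi0_lin : linear phi0.
  move=> a [y1 Hy1] [y2 Hy2]; have [r1 E1] := Hy1; have [r2 E2] := Hy2.
  rewrite (phi0E (exist _ y1 Hy1) r1) // (phi0E (exist _ y2 Hy2) r2) // (phi0E _ (a * r1 + r2)).
    by rewrite scalerDl scalerA.
  by rewrite /= E1 E2 scalerDl scalerA.
have [phi Hphi] := injz _ _ (sincl V) (L phi0_lin) (@sincl_inj _ _ V).
have phim : phi m = x.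
  have Hv : V m by exists 1; rewrite scale1r.
  have := Hphi (exist _ m Hv); rewrite sinclE LE /= => ->.
  by rewrite (phi0E _ 1) ?scale1r.
pose gz := lcomp (L (@injc_lin R G env z)) phi.
have [h Hh] := HX gz.
have H2 : (h m).2 = 0.
  apply: (FQ I GI) => r Hr.
  have : r *: h m = 0 by rewrite -linearZ_LR Hm // linear0.
  by move=> /(f_equal snd).
have G0 : gz m = 0.
  rewrite -Hh; exact: (etrans (f_equal f H2) (linear0 f)).
move: G0 => /(f_equal (fun u : dprodm env => u z)).
rewrite /gz /lcomp !LE injc_at phim => Hx0.
have Hx1 : x = 0 := Hx0.
have : J 1 by apply/annx; rewrite Hx1 scaler0.
by rewrite /J scale1r.
Qed.


Lemma incl_lin (R : comPzRingType) (E Q E1 : lmodType R) (f : {linear Q -> E1}) :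
  linear (@incl_ker R E Q E1 f).
Proof. by move=> a [x k] [y l]. Qed.
Lemma inE0_lin (R : comPzRingType) (E C : lmodType R) :
  linear (fun e : E => (e, 0) : (E * C)%type).
Proof. by move=> a x y; congr pair; rewrite /= ?scaler0 ?addr0. Qed.
Lemma lift0_lin (R : comPzRingType) (E Q X : lmodType R) (h : {linear X -> Q}) :
  linear (fun x : X => (0, h x) : (E * Q)%type).
Proof. by move=> a x y; rewrite linearP; congr pair; rewrite /= ?scaler0 ?addr0. Qed.

Theorem mainTheorem16 (R : comPzRingType) (G : (R -> Prop) -> Prop)
  (hG : gabriel_filter G) (hfin : finite_type G)
  (E : lmodType R) (hE : injective_module E) (hcogE : forall M, Cogen E M <-> F_G G M)
  (env : forall I : {I : R -> Prop | G I}, lmodType R)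
  (henv : forall I, inj_envelope_of_cyclic (proj1_sig I) (env I)) :
  let E1 : lmodType R := dprodm env in
  (exists (Q : lmodType R) (f : {linear Q -> E1}), injective_module Q /\ precover G f)
  /\
  (forall (Q : lmodType R) (f : {linear Q -> E1}),
     injective_module Q -> precover G f ->
     let E0 : lmodType R := (E * Q)%type in
     let lam : {linear E0 -> E1} := @zero_then R E Q E1 f in
     let C : lmodType R := (E * kerm f)%type in
     [/\ injective (@incl_ker R E Q E1 f),
         (forall e0 : E0, lam e0 = 0 <-> exists c : C, @incl_ker R E Q E1 f c = e0),
         cosilting_wrt C lam
       & forall M, Cogen C M <-> F_G G M]).
Proof.
move=> E1.
have FE : F_G G E by apply/hcogE; apply: Cogen_self.
have hcog : forall M, F_G G M -> Cogen E M by move=> M /hcogE.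
have hE1 : injective_module E1 by apply: inj_dprod => I; case: (henv I).
split.
  pose W : lmodType R := dprodm (fun _ : E => E).
  have [f Hf] := @dsum_exists R W E1 hE1.
  have hQ : injective_module (QQ W E1) by apply: inj_dprod => _; apply: inj_dprod => _.
  have FQ : F_G G (QQ W E1) by apply: F_G_dprod => _; apply: F_G_dprod => _.
  exists (QQ W E1), f; split => //; split => // P g hP.
  exact: (lift_main hG hfin g hP hE hcog hQ hE1 Hf).
move=> Q f hQ [FQ hpre] E0 lam C.
have FC : F_G G C by apply: F_G_pair => //; apply: F_G_kerm.
have Hinj : injective (@incl_ker R E Q E1 f).
  move=> [a k] [b l] [-> Hkl]; congr pair; exact: kerm_inj.
have Hex : forall e0 : E0, lam e0 = 0 <-> exists c : C, @incl_ker R E Q E1 f c = e0.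
  move=> [a q]; split.
  - move=> Hq; have Hq' : f q == 0 by apply/eqP; exact: Hq.
    by exists (a, exist _ q Hq').
  - move=> [[b [k Hk]] Heq]; case: Heq => _ <-; exact/eqP.
have HCog : forall M, Cogen C M <-> F_G G M.
  move=> M; split; first exact: F_G_Cogen.
  move=> /hcog HM; apply: (Cogen_mono (j := L (@inE0_lin R E (kerm f)))) HM.
  by move=> x y [].
split => //; split.
- exact: inj_pair.
- exact: hE1.
- exists (L (@incl_lin R E Q E1 f)); split => //.
- move=> X; split.
  + move=> /HCog HX g; have [h Hh] := hpre X g HX.
    exists (L (@lift0_lin R E Q X h)); move=> x; rewrite LE; exact: Hh.
  + move=> HX; apply/HCog; exact: (Clam_FG hG henv FQ HX).
Qed.
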